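(* In the setting described in the context, equality $H(\theta)=C_\Upsilon(\theta)$ holds if and only if $\langle w_j'(\theta)|w_k(\theta)\rangle=0$ for all $j,k$ (including $j=k$) with $p_j(\theta)>0$ and $p_k(\theta)>0$.
   Context: A one-parameter quantum channel is a map $\rho_0\mapsto\sum_k E_k(\theta)\rho_0E_k(\theta)^\dagger$ on density matrices on $\mathbb{C}^d$, with Kraus operators $E_k(\theta)$ depending differentiably on a real parameter $\theta$ and $\sum_k E_k^\dagger E_k=I$. The input state is a fixed pure state $\rho_0=|\psi_0\rangle\langle\psi_0|$. The canonical Kraus operators $\{\Upsilon_k(\theta)\}_{k=1}^d$ form a differentiable Kraus representation of the same channel with $\mathrm{tr}\{\Upsilon_k\rho_0\Upsilon_j^\dagger\}=\delta_{jk}p_k(\theta)$. The output state is $\rho_{out}(\theta)=\sum_k p_k(\theta)|w_k(\theta)\rangle\langle w_k(\theta)|$, with $\{|w_k(\theta)\rangle\}$ an orthonormal basis depending differentiably on $\theta$ and $|w_k\rangle=p_k^{-1/2}\Upsilon_k|\psi_0\rangle$ when $p_k>0$. A prime denotes $d/d\theta$. $C_\Upsilon(\theta)=4\sum_k\mathrm{tr}\{\Upsilon_k'\rho_0\Upsilon_k'^\dagger\}$ (the Sarovar–Milburn bound), and $H(\theta)=\mathrm{tr}\{\rho_{out}\lambda^2\}$ is the SLD quantum information, $\lambda$ being a self-adjoint solution of $\rho_{out}'=\frac12(\rho_{out}\lambda+\lambda\rho_{out})$. *)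

(* Defs.v *)
From mathcomp Require Import all_boot all_order all_algebra.
From mathcomp Require Import all_classical all_reals all_analysis.
From mathcomp Require Import complex.
Import numFieldNormedType.Exports.
Import GRing.Theory Num.Theory.
Set Implicit Arguments. Unset Strict Implicit. Unset Printing Implicit Defensive.
Local Open Scope ring_scope.

Section QDefs.
Variable R : realType.
Local Notation C := R[i].

Definition adj (m n : nat) (A : 'M[C]_(m, n)) : 'M[C]_(n, m) :=
  \matrix_(i < n, j < m) conjc (A j i).

Definition braket (d : nat) (a b : 'cV[C]_d) : C := (adj a *m b) 0 0.

Definition mx_derivable (m n : nat) (f : R -> 'M[C]_(m, n)) (t : R) : Prop :=
  forall i j, derivable (fun s => complex.Re (f s i j)) t 1 /\
              derivable (fun s => complex.Im (f s i j)) t 1.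

Definition mx_deriv (m n : nat) (f : R -> 'M[C]_(m, n)) (t : R) : 'M[C]_(m, n) :=
  \matrix_(i < m, j < n)
    complex.Complex ('D_1 (fun s => complex.Re (f s i j)) t) ('D_1 (fun s => complex.Im (f s i j)) t).

Definition pure_state (d : nat) (psi0 : 'cV[C]_d) : 'M[C]_d := psi0 *m adj psi0.

Definition rho_out (d : nat) (p : 'I_d -> R -> R) (w : 'I_d -> R -> 'cV[C]_d)
  (t : R) : 'M[C]_d :=
  \sum_(k < d) ((p k t)%:C)%C *: (w k t *m adj (w k t)).

Definition C_Ups (d : nat) (Ups : 'I_d -> R -> 'M[C]_d) (psi0 : 'cV[C]_d)
  (t : R) : C :=
  4%:R * \sum_(k < d)
    \tr (mx_deriv (Ups k) t *m pure_state psi0 *m adj (mx_deriv (Ups k) t)).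

Definition is_SLD (d : nat) (rho : R -> 'M[C]_d) (t : R) (lam : 'M[C]_d) : Prop :=
  adj lam = lam /\
  mx_deriv rho t = (2%:R)^-1 *: (rho t *m lam + lam *m rho t).

Definition SLD_info (d : nat) (rho : R -> 'M[C]_d) (t : R) (lam : 'M[C]_d) : C :=
  \tr (rho t *m (lam *m lam)).

End QDefs.

(* Main.v *)
Require Import Defs.
From mathcomp Require Import all_boot all_order all_algebra.
From mathcomp Require Import all_classical all_reals all_analysis.
From mathcomp Require Import complex.
From mathcomp Require Import ring lra.
Import numFieldNormedType.Exports.
Import GRing.Theory Num.Theory.
Local Open Scope ring_scope.

Section RD.
Context {R : realType}.
Implicit Types (f g : R -> R) (t a b v : R).

Definition hasd f t v := derivable f t 1 /\ 'D_1 f t = v.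

Lemma hasdD f g t a b : hasd f t a -> hasd g t b ->
  hasd (fun s => f s + g s) t (a + b).
Proof. move=> [df <-] [dg <-]; split; [exact: derivableD | exact: deriveD]. Qed.

Lemma hasdM f g t a b : hasd f t a -> hasd g t b ->
  hasd (fun s => f s * g s) t (f t * b + g t * a).
Proof. move=> [df <-] [dg <-]; split; [exact: derivableM | exact: deriveM]. Qed.

Lemma hasdN f t a : hasd f t a -> hasd (fun s => - f s) t (- a).
Proof. move=> [df <-]; split; [exact: derivableN | exact: deriveN]. Qed.

Lemma hasdB f g t a b : hasd f t a -> hasd g t b ->
  hasd (fun s => f s - g s) t (a - b).
Proof. by move=> ha hb; apply: hasdD => //; apply: hasdN. Qed.

Lemma hasdC (c : R) t : hasd (fun _ : R => c) t 0.
Proof. split; [exact: derivable_cst | exact: derive_cst]. Qed.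

Lemma hasdS n (h : 'I_n -> R -> R) t (a : 'I_n -> R) : (forall i, hasd (h i) t (a i)) ->
  hasd (fun s => \sum_(i < n) h i s) t (\sum_(i < n) a i).
Proof.
move=> dh.
have E : (fun s => \sum_(i < n) h i s) = \sum_(i < n) h i by rewrite fct_sumE.
rewrite E; split; first by apply: derivable_sum => i; case: (dh i).
rewrite derive_sum; last by move=> i; case: (dh i).
by apply: eq_bigr => i _; case: (dh i).
Qed.

Lemma hasd_ext f g t a : (forall s, f s = g s) -> hasd f t a -> hasd g t a.
Proof. by move=> e; rewrite (_ : f = g) //; apply/funext. Qed.

Lemma hasd_uniq f t a b : hasd f t a -> hasd f t b -> a = b.
Proof. by move=> [_ <-] [_ <-]. Qed.

End RD.
Section CD.
Context {R : realType}.
Local Notation C := R[i].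
Implicit Types (x y a b z : C) (f g : R -> C) (t : R).

Lemma ReD x y : complex.Re (x + y) = complex.Re x + complex.Re y.
Proof. by case: x => a b; case: y. Qed.
Lemma ImD x y : complex.Im (x + y) = complex.Im x + complex.Im y.
Proof. by case: x => a b; case: y. Qed.
Lemma ReM x y : complex.Re (x * y) = complex.Re x * complex.Re y - complex.Im x * complex.Im y.
Proof. by case: x => a b; case: y. Qed.
Lemma ImM x y : complex.Im (x * y) = complex.Re x * complex.Im y + complex.Im x * complex.Re y.
Proof. by case: x => a b; case: y. Qed.
Lemma ReJ x : complex.Re (x^*)%C = complex.Re x. Proof. by case: x. Qed.
Lemma ImJ x : complex.Im (x^*)%C = - complex.Im x. Proof. by case: x. Qed.
Lemma ReS n (F : 'I_n -> C) : complex.Re (\sum_(i < n) F i) = \sum_(i < n) complex.Re (F i).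
Proof. by elim/big_rec2: _ => // i u v _ H; rewrite ReD H. Qed.
Lemma ImS n (F : 'I_n -> C) : complex.Im (\sum_(i < n) F i) = \sum_(i < n) complex.Im (F i).
Proof. by elim/big_rec2: _ => // i u v _ H; rewrite ImD H. Qed.

Definition chd (f : R -> C) t z :=
  hasd (fun s => complex.Re (f s)) t (complex.Re z) /\
  hasd (fun s => complex.Im (f s)) t (complex.Im z).

Lemma chdD f g t a b : chd f t a -> chd g t b -> chd (fun s => f s + g s) t (a + b).
Proof.
move=> [h1 h2] [h3 h4]; split.
  by apply: (@hasd_ext _ (fun s => complex.Re (f s) + complex.Re (g s)));
    [move=> s; rewrite ReD | rewrite ReD; exact: hasdD].
by apply: (@hasd_ext _ (fun s => complex.Im (f s) + complex.Im (g s)));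
  [move=> s; rewrite ImD | rewrite ImD; exact: hasdD].
Qed.

Lemma chdM f g t a b : chd f t a -> chd g t b ->
  chd (fun s => f s * g s) t (f t * b + a * g t).
Proof.
move=> [h1 h2] [h3 h4]; split.
  apply: (@hasd_ext _ (fun s => complex.Re (f s) * complex.Re (g s) - complex.Im (f s) * complex.Im (g s))).
    by move=> s; rewrite ReM.
  rewrite ReD !ReM; set u := (X in hasd _ _ X).
  have -> : u = (complex.Re (f t) * complex.Re b + complex.Re (g t) * complex.Re a) -
     (complex.Im (f t) * complex.Im b + complex.Im (g t) * complex.Im a).
    by rewrite /u; lra.
  by apply: hasdB; apply: hasdM.
apply: (@hasd_ext _ (fun s => complex.Re (f s) * complex.Im (g s) + complex.Im (f s) * complex.Re (g s))).
  by move=> s; rewrite ImM.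
rewrite ImD !ImM; set u := (X in hasd _ _ X).
have -> : u = (complex.Re (f t) * complex.Im b + complex.Im (g t) * complex.Re a) +
   (complex.Im (f t) * complex.Re b + complex.Re (g t) * complex.Im a).
  by rewrite /u; lra.
by apply: hasdD; apply: hasdM.
Qed.

Lemma chdJ f t a : chd f t a -> chd (fun s => (f s)^*%C) t (a^*%C).
Proof.
move=> [h1 h2]; split.
  by apply: (@hasd_ext _ (fun s => complex.Re (f s))); [move=> s; rewrite ReJ | rewrite ReJ].
apply: (@hasd_ext _ (fun s => - complex.Im (f s))); first by move=> s; rewrite ImJ.
by rewrite ImJ; apply: hasdN.
Qed.

Lemma chdC (c : C) t : chd (fun _ => c) t 0.
Proof. by split; apply: hasdC. Qed.

Lemma chdS n (h : 'I_n -> R -> C) t (a : 'I_n -> C) : (forall i, chd (h i) t (a i)) ->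
  chd (fun s => \sum_(i < n) h i s) t (\sum_(i < n) a i).
Proof.
move=> dh; split.
  apply: (@hasd_ext _ (fun s => \sum_(i < n) complex.Re (h i s))).
    by move=> s; rewrite ReS.
  by rewrite ReS; apply: hasdS => i; case: (dh i).
apply: (@hasd_ext _ (fun s => \sum_(i < n) complex.Im (h i s))).
  by move=> s; rewrite ImS.
by rewrite ImS; apply: hasdS => i; case: (dh i).
Qed.

Lemma chdR (c : R -> R) t (a : R) : hasd c t a -> chd (fun s => (c s)%:C%C) t (a%:C%C).
Proof. by move=> h; split => //=; apply: hasdC. Qed.

Lemma chd_ext f g t a : (forall s, f s = g s) -> chd f t a -> chd g t a.
Proof. by move=> e; rewrite (_ : f = g) //; apply/funext. Qed.

End CD.

Import GRing.Theory Num.Theory.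
Set Implicit Arguments. Unset Strict Implicit.
Local Open Scope ring_scope.

Section MD.
Context {R : realType}.
Local Notation C := R[i].

Definition mhd m n (f : R -> 'M[C]_(m,n)) (t : R) (M : 'M[C]_(m,n)) :=
  forall i j, chd (fun s => f s i j) t (M i j).
Arguments mhd {m n}.

Lemma mhd_of m n (f : R -> 'M[C]_(m,n)) t :
  mx_derivable f t -> mhd f t (mx_deriv f t).
Proof. by move=> D i j; case: (D i j) => d1 d2; rewrite mxE; split; split. Qed.

Lemma mhd_to m n (f : R -> 'M[C]_(m,n)) t M :
  mhd f t M -> mx_derivable f t /\ mx_deriv f t = M.
Proof.
move=> D; split.
  by move=> i j; case: (D i j) => -[d1 _] [d2 _].
apply/matrixP => i j; rewrite mxE; case: (D i j) => -[_ ->] [_ ->].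
by case: (M i j).
Qed.

Lemma mhd_ext m n (f g : R -> 'M[C]_(m,n)) t M :
  (forall s, f s = g s) -> mhd f t M -> mhd g t M.
Proof. by move=> e; rewrite (_ : f = g) //; apply/funext. Qed.

Lemma mhd_uniq m n (f : R -> 'M[C]_(m,n)) t M N : mhd f t M -> mhd f t N -> M = N.
Proof. by move=> /mhd_to [_ <-] /mhd_to [_ <-]. Qed.

Lemma mhd_mul m n p (f : R -> 'M[C]_(m,n)) (g : R -> 'M[C]_(n,p)) t A B :
  mhd f t A -> mhd g t B -> mhd (fun s => f s *m g s) t (A *m g t + f t *m B).
Proof.
move=> dA dB i j.
apply: (@chd_ext _ (fun s => \sum_k f s i k * g s k j)).
  by move=> s; rewrite mxE.
have -> : (A *m g t + f t *m B) i j = \sum_k (f t i k * B k j + A i k * g t k j).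
  by rewrite !mxE -big_split /=; apply: eq_bigr => l _; rewrite addrC.
by apply: chdS => k; apply: chdM.
Qed.

Lemma mhd_adj m n (f : R -> 'M[C]_(m,n)) t A :
  mhd f t A -> mhd (fun s => adj (f s)) t (adj A).
Proof.
move=> dA i j; apply: (@chd_ext _ (fun s => (f s j i)^*%C)).
  by move=> s; rewrite mxE.
by rewrite mxE; apply: chdJ.
Qed.

Lemma mhd_add m n (f g : R -> 'M[C]_(m,n)) t A B :
  mhd f t A -> mhd g t B -> mhd (fun s => f s + g s) t (A + B).
Proof.
move=> dA dB i j; apply: (@chd_ext _ (fun s => f s i j + g s i j)).
  by move=> s; rewrite mxE.
by rewrite mxE; apply: chdD.
Qed.

Lemma mhd_sum m n k (f : 'I_k -> R -> 'M[C]_(m,n)) t (A : 'I_k -> 'M[C]_(m,n)) :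
  (forall l, mhd (f l) t (A l)) -> mhd (fun s => \sum_(l < k) f l s) t (\sum_(l < k) A l).
Proof.
move=> dA i j; apply: (@chd_ext _ (fun s => \sum_(l < k) f l s i j)).
  by move=> s; rewrite summxE.
by rewrite summxE; apply: chdS => l; apply: dA.
Qed.

Lemma mhd_cst m n (M : 'M[C]_(m,n)) t : mhd (fun _ => M) t 0.
Proof. by move=> i j; rewrite mxE; apply: chdC. Qed.

Lemma mhd_scaleR m n (c : R -> R) (f : R -> 'M[C]_(m,n)) t a A :
  hasd c t a -> mhd f t A ->
  mhd (fun s => (c s)%:C%C *: f s) t (a%:C%C *: f t + (c t)%:C%C *: A).
Proof.
move=> dc dA i j; apply: (@chd_ext _ (fun s => (c s)%:C%C * f s i j)).
  by move=> s; rewrite mxE.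
rewrite !mxE addrC; apply: chdM => //; exact: chdR.
Qed.

End MD.


Import Order.TTheory GRing.Theory Num.Theory.
Set Implicit Arguments. Unset Strict Implicit.
Local Open Scope ring_scope.

Section LA.
Context {R : realType}.
Local Notation C := R[i].
Implicit Types (x y c : C).

Lemma conjcD x y : ((x + y)^* = x^* + y^*)%C. Proof. by case: x; case: y => *; rewrite /= opprD. Qed.
Lemma conjcM x y : ((x * y)^* = x^* * y^*)%C.
Proof. by case: x => a b; case: y => c d /=; congr Complex; ring. Qed.
Lemma conjcK'' x : ((x^*)^* = x)%C. Proof. by case: x => a b /=; rewrite opprK. Qed.
Lemma conjcR (r : R) : ((r%:C)^* = r%:C)%C. Proof. by rewrite /= oppr0. Qed.
Lemma conjc0' : ((0 : C)^* = 0)%C. Proof. by rewrite /= oppr0. Qed.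
Lemma conjcN x : ((- x)^* = - x^*)%C. Proof. by case: x. Qed.
Lemma conjcS n (F : 'I_n -> C) : ((\sum_(i < n) F i)^* = \sum_(i < n) (F i)^*)%C.
Proof. by elim/big_rec2: _ => [|i u v _ <-]; rewrite ?conjc0' // conjcD. Qed.

Lemma adjK m n (A : 'M[C]_(m,n)) : adj (adj A) = A.
Proof. by apply/matrixP => i j; rewrite !mxE conjcK. Qed.

Lemma adj_mul m n p (A : 'M[C]_(m,n)) (B : 'M[C]_(n,p)) : adj (A *m B) = adj B *m adj A.
Proof.
apply/matrixP => i j; rewrite !mxE rmorph_sum /= /=; apply: eq_bigr => k _.
by rewrite !mxE rmorphM mulrC.
Qed.

Lemma adj_add m n (A B : 'M[C]_(m,n)) : adj (A + B) = adj A + adj B.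
Proof. by apply/matrixP => i j; rewrite !mxE rmorphD. Qed.

Lemma adj_scale m n c (A : 'M[C]_(m,n)) : adj (c *: A) = (c^*)%C *: adj A.
Proof. by apply/matrixP => i j; rewrite !mxE rmorphM. Qed.

Lemma adj_sum m n k (F : 'I_k -> 'M[C]_(m,n)) : adj (\sum_(l < k) F l) = \sum_(l < k) adj (F l).
Proof.
apply/matrixP => i j; rewrite !mxE !summxE rmorph_sum /= /=; apply: eq_bigr => l _.
by rewrite mxE.
Qed.

Lemma adj0 m n : adj (0 : 'M[C]_(m,n)) = 0.
Proof. by apply/matrixP => i j; rewrite !mxE conjc0'. Qed.

Lemma braketE d (a b : 'cV[C]_d) : braket a b = \sum_i ((a i 0)^*)%C * b i 0.
Proof. by rewrite /braket mxE; apply: eq_bigr => i _; rewrite mxE. Qed.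

Lemma braketJ d (a b : 'cV[C]_d) : braket b a = ((braket a b)^*)%C.
Proof.
rewrite !braketE rmorph_sum /= /=; apply: eq_bigr => i _.
by rewrite rmorphM /= conjcK mulrC.
Qed.

Lemma braketDr d (a b c : 'cV[C]_d) : braket a (b + c) = braket a b + braket a c.
Proof. by rewrite !braketE -big_split; apply: eq_bigr => i _; rewrite mxE mulrDr. Qed.

Lemma braketZr d (a b : 'cV[C]_d) c : braket a (c *: b) = c * braket a b.
Proof. by rewrite !braketE mulr_sumr; apply: eq_bigr => i _; rewrite mxE mulrCA. Qed.


Lemma braketSr d k (a : 'cV[C]_d) (F : 'I_k -> 'cV[C]_d) :
  braket a (\sum_(l < k) F l) = \sum_(l < k) braket a (F l).
Proof.
rewrite braketE; under eq_bigr do rewrite summxE mulr_sumr.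
rewrite exchange_big /=; apply: eq_bigr => l _; by rewrite braketE.
Qed.

Lemma braketDl d (a b c : 'cV[C]_d) : braket (a + b) c = braket a c + braket b c.
Proof. by rewrite braketJ braketDr rmorphD /= -!braketJ. Qed.

Lemma braketZl d (a b : 'cV[C]_d) c : braket (c *: a) b = (c^*)%C * braket a b.
Proof. by rewrite braketJ braketZr rmorphM /= -braketJ. Qed.

Lemma braketSl d k (a : 'cV[C]_d) (F : 'I_k -> 'cV[C]_d) :
  braket (\sum_(l < k) F l) a = \sum_(l < k) braket (F l) a.
Proof. by rewrite braketJ braketSr rmorph_sum /= /=; apply: eq_bigr => l _; rewrite -braketJ. Qed.

Lemma braket_mull d (M : 'M[C]_d) (a b : 'cV[C]_d) : braket (M *m a) b = braket a (adj M *m b).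
Proof. by rewrite /braket adj_mul mulmxA. Qed.

Lemma braket_mulr d (M : 'M[C]_d) (a b : 'cV[C]_d) : braket a (M *m b) = braket (adj M *m a) b.
Proof. by rewrite braket_mull adjK. Qed.

Lemma mul_outer m d (M : 'M[C]_(m,1)) (b c : 'cV[C]_d) : M *m (adj b *m c) = braket b c *: M.
Proof.
apply/matrixP => i j; rewrite !mxE big_ord1 (ord1 j) mulrC; congr (_ * _).
Qed.

Lemma tr_outer d (a b : 'cV[C]_d) : \tr (a *m adj b) = braket b a.
Proof.
rewrite /mxtrace braketE; apply: eq_bigr => i _.
by rewrite !mxE big_ord1 mxE mulrC.
Qed.

Definition nrm (x : C) : R := complex.Re x ^+ 2 + complex.Im x ^+ 2.

Lemma nrm_ge0 x : 0 <= nrm x. Proof. by rewrite /nrm addr_ge0 // sqr_ge0. Qed.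
Lemma mulcJ x : x * (x^*)%C = (nrm x)%:C%C.
Proof. by case: x => a b; rewrite /nrm /=; congr Complex; ring. Qed.
Lemma nrm_eq0 x : nrm x = 0 -> x = 0.
Proof.
case: x => a b; rewrite /nrm /= => h.
have ha : a ^+ 2 = 0 by apply/eqP; rewrite eq_le sqr_ge0 andbT -h lerDl sqr_ge0.
have hb : b ^+ 2 = 0 by apply/eqP; rewrite eq_le sqr_ge0 andbT -h lerDr sqr_ge0.
by move: ha hb => /eqP; rewrite sqrf_eq0 => /eqP -> /eqP; rewrite sqrf_eq0 => /eqP ->.
Qed.

Lemma braket_self d (a : 'cV[C]_d) : braket a a = (\sum_i nrm (a i 0))%:C%C.
Proof.
rewrite braketE rmorph_sum /= /=; apply: eq_bigr => i _.
by rewrite mulrC mulcJ.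
Qed.

Lemma braket_self_eq0 d (a : 'cV[C]_d) : braket a a = 0 -> a = 0.
Proof.
rewrite braket_self => -[] /eqP; rewrite psumr_eq0 => [/allP H|i _]; last exact: nrm_ge0.
apply/matrixP => i j; rewrite (ord1 j) mxE; apply: nrm_eq0; apply/eqP.
by apply: H; rewrite mem_index_enum.
Qed.

End LA.

Import Order.TTheory GRing.Theory Num.Theory.
Set Implicit Arguments. Unset Strict Implicit.
Local Open Scope ring_scope.

Section ONB.
Context {R : realType} {d : nat}.
Local Notation C := R[i].
Variable W : 'I_d -> 'cV[C]_d.
Hypothesis HW : forall j k, braket (W j) (W k) = if j == k then 1 else 0.

Lemma compl : \sum_j W j *m adj (W j) = 1%:M.
Proof.
pose M : 'M[C]_d := \matrix_(i, j) W j i 0.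
have h1 : adj M *m M = 1%:M.
  apply/matrixP => a b.
  have -> : (1%:M : 'M[C]_d) a b = if a == b then 1 else 0 by rewrite mxE; case: (a == b).
  rewrite -HW braketE mxE; apply: eq_bigr => i _; by rewrite !mxE.
have h2 := mulmx1C h1.
apply/matrixP => i l; rewrite -h2 summxE !mxE; apply: eq_bigr => j _.
by rewrite !mxE big_ord1 !mxE.
Qed.

Lemma expand (x : 'cV[C]_d) : x = \sum_j braket (W j) x *: W j.
Proof.
rewrite -{1}(mul1mx x) -compl mulmx_suml; apply: eq_bigr => j _.
by rewrite -mulmxA mul_outer.
Qed.

Lemma trace_basis (X : 'M[C]_d) : \tr X = \sum_j braket (W j) (X *m W j).
Proof.
rewrite -{1}(mulmx1 X) -compl mulmx_sumr raddf_sum /=; apply: eq_bigr => j _.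
by rewrite mulmxA tr_outer.
Qed.

Lemma parseval (x y : 'cV[C]_d) :
  braket x y = \sum_j ((braket (W j) x)^*)%C * braket (W j) y.
Proof.
rewrite {1}(expand y) braketSr; apply: eq_bigr => j _.
by rewrite braketZr [braket x _]braketJ mulrC.
Qed.

End ONB.

Import Order.TTheory GRing.Theory Num.Theory.
Set Implicit Arguments. Unset Strict Implicit.
Local Open Scope ring_scope.

Section T.
Context {R : realType}.
Local Notation C := R[i].

Definition gg (Pj Pk : R) (a : C) : R := 16%:R * Pj ^+ 2 * Pk * nrm a / (Pj + Pk) ^+ 2.

Lemma term_diag (P S S' : R) (a Lc : C) : 0 <= S -> P = S * S -> (P = 0 -> S' = 0) ->
  a + (a^*)%C = 0 ->
  (P%:C)%C * Lc = ((2 * S * S')%:C)%C ->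
  4%:R * nrm ((S'%:C)%C - (S%:C)%C * (a^*)%C) = P * nrm Lc + gg P P a.
Proof.
case: a => x y; case: Lc => u v; rewrite /gg /nrm /= => S0 PS PS' [ex _] [e1 e2].
have x0 : x = 0 by lra.
subst x.
have [P0|Pn0] := eqVneq P 0.
  have S00 : S = 0.
    by move: PS; rewrite P0 => /esym/eqP; rewrite mulf_eq0 orbb => /eqP.
  rewrite S00 PS' // P0; ring.
have Sn0 : S != 0 by apply: contraNneq Pn0 => S00; rewrite PS S00 mul0r.
have v0 : v = 0.
  by apply/eqP; move: e2; rewrite mul0r addr0 => /eqP; rewrite mulf_eq0 (negbTE Pn0).
have hu : u = 2 * S * S' / P.
  by rewrite -e1 mul0r subr0 mulrAC divff // mul1r.
rewrite v0 hu PS; field; rewrite ?mulf_neq0 //.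
have Sp : 0 < S by rewrite lt_neqAle eq_sym Sn0 S0.
by rewrite Sn0 andbT gt_eqF // addr_gt0 // mulr_gt0.
Qed.

Lemma term_off (Pj Pk Sj Sk : R) (a Lc : C) : 0 <= Sj -> 0 <= Sk -> Pj = Sj * Sj -> Pk = Sk * Sk ->
  (((Pj + Pk) / 2)%:C)%C * Lc = ((Pk - Pj)%:C)%C * a ->
  4%:R * nrm (- ((Sj%:C)%C * (a^*)%C)) = Pj * nrm Lc + gg Pj Pk a.
Proof.
case: a => x y; case: Lc => u v; rewrite /gg /nrm /= => Sj0 Sk0 PSj PSk [e1 e2].
have [P0|Pn0] := eqVneq Pj 0.
  have S00 : Sj = 0.
    by move: PSj; rewrite P0 => /esym/eqP; rewrite mulf_eq0 orbb => /eqP.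
  rewrite S00 P0; ring.
have Sn0 : Sj != 0 by apply: contraNneq Pn0 => S00; rewrite PSj S00 mul0r.
have Pjp : 0 < Pj by rewrite lt_neqAle eq_sym Pn0 PSj mulr_ge0.
have Pkp : 0 <= Pk by rewrite PSk mulr_ge0.
have hs : Pj + Pk != 0 by rewrite gt_eqF // ltr_pwDl.
have e1' : (Pj + Pk) * u = 2 * (Pk - Pj) * x.
  have -> : (Pj + Pk) * u = 2 * ((Pj + Pk) / 2 * u - 0 * v) by field.
  by rewrite e1; ring.
have e2' : (Pj + Pk) * v = 2 * (Pk - Pj) * y.
  have -> : (Pj + Pk) * v = 2 * ((Pj + Pk) / 2 * v + 0 * u) by field.
  by rewrite e2; ring.
have hu : u = 2 * (Pk - Pj) * x / (Pj + Pk).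
  by rewrite -e1' mulrAC divff // mul1r.
have hv : v = 2 * (Pk - Pj) * y / (Pj + Pk).
  by rewrite -e2' mulrAC divff // mul1r.
rewrite hu hv PSj PSk; field.
by rewrite -PSj -PSk.
Qed.

Lemma gg_ge0 Pj Pk a : 0 <= Pj -> 0 <= Pk -> 0 <= gg Pj Pk a.
Proof.
move=> h1 h2; rewrite /gg; apply: divr_ge0; last exact: sqr_ge0.
by rewrite !mulr_ge0 ?sqr_ge0 ?nrm_ge0.
Qed.

Lemma gg_eq0 Pj Pk a : 0 <= Pj -> 0 <= Pk ->
  (gg Pj Pk a = 0 <-> (0 < Pj -> 0 < Pk -> a = 0)).
Proof.
move=> h1 h2; split.
  move=> H p1 p2; apply: nrm_eq0.
  have hs : Pj + Pk != 0 by rewrite gt_eqF // ltr_pwDl.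
  have -> : nrm a = gg Pj Pk a * (Pj + Pk) ^+ 2 / (16%:R * Pj ^+ 2 * Pk).
    rewrite /gg; field.
    by rewrite hs !gt_eqF.
  by rewrite H !mul0r.
have [/eqP P0|p1] := boolP (Pj == 0); first by rewrite /gg P0 => _; ring.
have [/eqP P0|p2] := boolP (Pk == 0); first by rewrite /gg P0 => _; ring.
move=> H; rewrite H; first by rewrite /gg /nrm /=; ring.
  by rewrite lt_neqAle eq_sym p1.
by rewrite lt_neqAle eq_sym p2.
Qed.
End T.

Unset Implicit Arguments. Set Strict Implicit.
Import Order.TTheory GRing.Theory Num.Theory.
Local Open Scope ring_scope.

Section Main.
Variables (R : realType) (d : nat) (psi0 : 'cV[R[i]]_d)
  (Ups : 'I_d -> R -> 'M[R[i]]_d) (p : 'I_d -> R -> R) (w : 'I_d -> R -> 'cV[R[i]]_d).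
Hypotheses
  (HUdiff : forall k t, mx_derivable (Ups k) t)
  (Hcanon : forall t (j k : 'I_d),
     \tr (Ups k t *m pure_state psi0 *m adj (Ups j t))
       = if j == k then ((p k t)%:C)%C else 0)
  (Hwdiff : forall k t, mx_derivable (w k) t)
  (Hwon : forall t (j k : 'I_d),
     braket (w j t) (w k t) = if j == k then 1 else 0)
  (Hw : forall t k, 0 < p k t ->
     w k t = (((Num.sqrt (p k t))^-1)%:C)%C *: (Ups k t *m psi0)).
Local Notation C := R[i].

Definition v k t := Ups k t *m psi0.

Lemma tr_pure (X : 'M[C]_d) : \tr (X *m pure_state psi0 *m adj X) = braket (X *m psi0) (X *m psi0).
Proof. by rewrite /pure_state -tr_outer adj_mul !mulmxA. Qed.

Lemma L1 k t : ((p k t)%:C)%C = braket (v k t) (v k t).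
Proof. by have := Hcanon t k k; rewrite eqxx tr_pure. Qed.

Lemma p_ge0 k t : 0 <= p k t.
Proof.
have := L1 k t; rewrite braket_self => -[->].
by apply: sumr_ge0 => i _; apply: nrm_ge0.
Qed.

Lemma p0_v k t : p k t = 0 -> v k t = 0.
Proof. by move=> h; apply: braket_self_eq0; rewrite -L1 h. Qed.

Lemma braket0r (a : 'cV[C]_d) : braket a 0 = 0.
Proof. by rewrite braketE big1 // => i _; rewrite mxE mulr0. Qed.

Definition s k t := complex.Re (braket (w k t) (v k t)).

Lemma s_sqrt k t : s k t = Num.sqrt (p k t).
Proof.
have [/eqP p0|pp] := boolP (p k t == 0).
  by rewrite /s p0_v // braket0r p0 sqrtr0.
have pp' : 0 < p k t by rewrite lt_neqAle eq_sym pp p_ge0.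
have e := Hw t k pp'.
have ev : v k t = ((Num.sqrt (p k t))%:C)%C *: w k t.
  rewrite e scalerA -rmorphM /= divff ?scale1r //.
  by rewrite sqrtr_eq0 -ltNge.
by rewrite /s ev braketZr Hwon eqxx mulr1.
Qed.

Lemma s_ge0 k t : 0 <= s k t. Proof. by rewrite s_sqrt sqrtr_ge0. Qed.
Lemma s_sq k t : s k t * s k t = p k t.
Proof. by rewrite s_sqrt -expr2 sqr_sqrtr // p_ge0. Qed.

Lemma v_eq k t : v k t = ((s k t)%:C)%C *: w k t.
Proof.
have [/eqP p0|pp] := boolP (p k t == 0).
  by rewrite p0_v // s_sqrt p0 sqrtr0 scale0r.
have pp' : 0 < p k t by rewrite lt_neqAle eq_sym pp p_ge0.
rewrite s_sqrt Hw // scalerA -rmorphM /= mulfV ?scale1r //.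
by rewrite sqrtr_eq0 -ltNge.
Qed.

Lemma rho_eq t : rho_out p w t = \sum_k v k t *m adj (v k t).
Proof.
apply: eq_bigr => k _; rewrite v_eq adj_scale conjcR -scalemxAl -scalemxAr scalerA.
by rewrite -rmorphM /= s_sq.
Qed.

Lemma hv k t : mhd (v k) t (mx_deriv (Ups k) t *m psi0).
Proof.
have := mhd_mul (mhd_of (HUdiff k t)) (mhd_cst psi0 t).
by rewrite mulmx0 addr0.
Qed.

Lemma hs k t : derivable (s k) t 1.
Proof.
have H := mhd_mul (mhd_adj (mhd_of (Hwdiff k t))) (hv k t).
by case: (H 0 0) => -[h _] _; exact: h.
Qed.

Lemma fermat k th : p k th = 0 -> 'D_1 (s k) th = 0.
Proof.
move=> p0.
have H := @derive1_at_min R (s k) (th - 1) (th + 1) th.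
have [||||_ ->] // := H.
- lra.
- by move=> t _; apply: hs.
- by rewrite in_itv /=; apply/andP; split; lra.
- by move=> t _; rewrite s_sqrt p0 sqrtr0 s_ge0.
Qed.

Lemma v_deriv k t : mx_deriv (Ups k) t *m psi0 =
  (('D_1 (s k) t)%:C)%C *: w k t + ((s k t)%:C)%C *: mx_deriv (w k) t.
Proof.
apply: (mhd_uniq (hv k t)).
apply: (mhd_ext (fun s0 => esym (v_eq k s0))).
apply: mhd_scaleR; last exact: mhd_of.
by split => //; apply: hs.
Qed.

Lemma rho_deriv t : mx_deriv (rho_out p w) t =
  \sum_k ((mx_deriv (Ups k) t *m psi0) *m adj (v k t) +
          v k t *m adj (mx_deriv (Ups k) t *m psi0)).
Proof.
have H : mhd (rho_out p w) t (\sum_k ((mx_deriv (Ups k) t *m psi0) *m adj (v k t) +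
          v k t *m adj (mx_deriv (Ups k) t *m psi0))).
  apply: (mhd_ext (fun s0 => esym (rho_eq s0))).
  by apply: mhd_sum => k; apply: mhd_mul (hv k t) (mhd_adj (hv k t)).
by case: (mhd_to H).
Qed.

Lemma worth j k t : braket (mx_deriv (w j) t) (w k t) + braket (w j t) (mx_deriv (w k) t) = 0.
Proof.
have H := mhd_mul (mhd_adj (mhd_of (Hwdiff j t))) (mhd_of (Hwdiff k t)).
have H2 : mhd (fun s0 => adj (w j s0) *m w k s0) t 0.
  apply: (mhd_ext _ (mhd_cst ((if j == k then 1 else 0)%:M) t)) => s0.
  apply/matrixP => a b; rewrite (ord1 a) (ord1 b) mxE eqxx mulr1n.
  by rewrite -(Hwon s0).
have := mhd_uniq H H2 => /matrixP /(_ 0 0).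
have e2 : forall A B : 'M[C]_1, (A + B) 0 0 = A 0 0 + B 0 0 by move=> *; rewrite mxE.
by move=> e; rewrite /braket -e2 e mxE.
Qed.

Lemma sumdl (F : 'I_d -> C) k : \sum_m (if m == k then F m else 0) = F k.
Proof. by rewrite (bigD1 k) //= eqxx big1 ?addr0 // => m /negbTE ->. Qed.

Lemma ifM (b : bool) (x y : C) : (if b then x else 0) * y = if b then x * y else 0.
Proof. by case: b; rewrite ?mul0r. Qed.
Lemma Mif (b : bool) (x y : C) : y * (if b then x else 0) = if b then y * x else 0.
Proof. by case: b; rewrite ?mulr0. Qed.

Lemma outer_app (a b c : 'cV[C]_d) : (a *m adj b) *m c = braket b c *: a.
Proof. by rewrite -mulmxA mul_outer. Qed.

Section At.
Variable th : R.
Local Notation W j := (w j th).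
Local Notation W' j := (mx_deriv (w j) th).
Local Notation S j := (s j th).
Local Notation S' j := ('D_1 (s j) th).
Local Notation V' k := (mx_deriv (Ups k) th *m psi0).
Definition A j k := braket (W j) (W' k).

Lemma bWv j k : braket (W j) (v k th) = if j == k then ((S k)%:C)%C else 0.
Proof. by rewrite v_eq braketZr Hwon; case: (j == k); rewrite ?mulr1 ?mulr0. Qed.

Lemma bvW j k : braket (v j th) (W k) = if j == k then ((S j)%:C)%C else 0.
Proof. by rewrite v_eq braketZl conjcR Hwon; case: (j == k); rewrite ?mulr1 ?mulr0. Qed.

Lemma bW'W j k : braket (W' j) (W k) = - A j k.
Proof. by apply/eqP; rewrite -addr_eq0 worth. Qed.

Lemma bWV' j k : braket (W j) (V' k) = (if j == k then ((S' k)%:C)%C else 0) + ((S k)%:C)%C * A j k.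
Proof.
rewrite v_deriv braketDr !braketZr Hwon /A.
by case: (j == k); rewrite ?mulr1 ?mulr0.
Qed.

Lemma bV'W j k : braket (V' j) (W k) = (if j == k then ((S' j)%:C)%C else 0) - ((S j)%:C)%C * A j k.
Proof.
rewrite v_deriv braketDl !braketZl !conjcR Hwon bW'W mulrN.
by case: (j == k); rewrite ?mulr1 ?mulr0.
Qed.

Lemma F_D j k : braket (W j) (mx_deriv (rho_out p w) th *m W k) =
  (if j == k then ((S k)%:C)%C * ((S' k)%:C)%C + ((S j)%:C)%C * ((S' j)%:C)%C else 0)
  + (((S k)%:C)%C * ((S k)%:C)%C - ((S j)%:C)%C * ((S j)%:C)%C) * A j k.
Proof.
rewrite rho_deriv mulmx_suml braketSr.
under eq_bigr do rewrite mulmxDl !outer_app braketDr !braketZr bvW bWv ifM Mif.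
rewrite big_split /= sumdl.
under eq_bigr do rewrite eq_sym.
rewrite sumdl bWV' bV'W.
case: (eqVneq j k) => [->|ne]; first by ring.
by ring.
Qed.

Lemma F_rhoW k : rho_out p w th *m W k = ((p k th)%:C)%C *: W k.
Proof.
rewrite /rho_out mulmx_suml.
under eq_bigr => m _ do rewrite -scalemxAl outer_app Hwon scalerA Mif mulr1.
rewrite (bigD1 k) //= eqxx big1 ?addr0 // => m /negbTE ->.
by rewrite scale0r.
Qed.

Lemma rho_herm : adj (rho_out p w th) = rho_out p w th.
Proof.
rewrite /rho_out adj_sum; apply: eq_bigr => m _.
by rewrite adj_scale conjcR adj_mul adjK.
Qed.

Lemma bWrho j (x : 'cV[C]_d) : braket (W j) (rho_out p w th *m x) = ((p j th)%:C)%C * braket (W j) x.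
Proof. by rewrite braket_mulr rho_herm F_rhoW braketZl conjcR. Qed.

Definition L (lam : 'M[C]_d) j k := braket (W j) (lam *m W k).

Lemma F_SLD lam : is_SLD (rho_out p w) th lam -> forall j k,
  braket (W j) (mx_deriv (rho_out p w) th *m W k) =
  2^-1 * (((p j th)%:C)%C + ((p k th)%:C)%C) * L lam j k.
Proof.
move=> [_ ->] j k.
rewrite -scalemxAl braketZr mulmxDl -!mulmxA braketDr bWrho F_rhoW.
by rewrite -scalemxAr braketZr /L; ring.
Qed.

Lemma Lherm lam : adj lam = lam -> forall j k, L lam k j = ((L lam j k)^*)%C.
Proof. by move=> h j k; rewrite /L braket_mulr h braketJ. Qed.

Lemma F_H lam : is_SLD (rho_out p w) th lam ->
  SLD_info (rho_out p w) th lam =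
  \sum_j \sum_k ((p j th)%:C)%C * (L lam j k * ((L lam j k)^*)%C).
Proof.
move=> [hh hs].
rewrite /SLD_info (trace_basis (Hwon th)); apply: eq_bigr => j _.
rewrite -mulmxA bWrho -mulmxA braket_mulr hh (parseval (Hwon th)) mulr_sumr.
apply: eq_bigr => k _; congr (_ * _).
by rewrite -/(L lam k j) (Lherm lam hh) conjcK mulrC.
Qed.

Lemma F_C : C_Ups Ups psi0 th =
  4%:R * \sum_j \sum_k ((braket (W k) (V' j))^*)%C * braket (W k) (V' j).
Proof.
rewrite /C_Ups; congr (_ * _); apply: eq_bigr => j _.
by rewrite tr_pure (parseval (Hwon th)).
Qed.

Lemma per_term lam : is_SLD (rho_out p w) th lam -> forall j k,
  4%:R * nrm (braket (W k) (V' j)) = p j th * nrm (L lam j k) + gg (p j th) (p k th) (A j k).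
Proof.
move=> hl j k.
have eL := F_SLD lam hl j k; rewrite F_D in eL.
have eA : A k j = - ((A j k)^*)%C by rewrite /A braketJ -/(braket (W' j) (W k)) bW'W rmorphN.
rewrite bWV' eA mulrN.
case: (eqVneq j k) => [ejk|ne].
  subst k; rewrite eqxx in eL *.
  apply: term_diag; first exact: s_ge0.
  - by rewrite s_sq.
  - exact: fermat.
  - have := worth j j th; rewrite braketJ -/(A j j) addrC => <-.
    by [].
  have h2 : ((p j th)%:C)%C = 2^-1 * (((p j th)%:C)%C + ((p j th)%:C)%C) :> C.
    by field.
  rewrite h2 -eL subrr mul0r addr0 !rmorphM /= rmorph_nat; ring.
rewrite (negbTE ne) in eL; rewrite sub0r.
apply: term_off; [exact: s_ge0 | exact: s_ge0 | by rewrite s_sq | by rewrite s_sq |].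
have -> : (((p j th + p k th) / 2)%:C)%C = 2^-1 * (((p j th)%:C)%C + ((p k th)%:C)%C) :> C.
  by rewrite rmorphM /= fmorphV /= rmorph_nat rmorphD mulrC.
by rewrite -eL add0r -!s_sq rmorphB !rmorphM.
Qed.

End At.

Lemma main th lam : is_SLD (rho_out p w) th lam ->
  SLD_info (rho_out p w) th lam = C_Ups Ups psi0 th <->
  (forall j k : 'I_d, 0 < p j th -> 0 < p k th ->
     braket (mx_deriv (w j) th) (w k th) = 0).
Proof.
move=> hl; rewrite (F_H th lam hl) (F_C th).
have eH : \sum_j \sum_k ((p j th)%:C)%C * (L th lam j k * ((L th lam j k)^*)%C)
   = ((\sum_j \sum_k p j th * nrm (L th lam j k))%:C)%C.
  rewrite rmorph_sum; apply: eq_bigr => j _; rewrite rmorph_sum; apply: eq_bigr => k _.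
  by rewrite mulcJ rmorphM.
have eC : 4%:R * \sum_j \sum_k ((braket (w k th) (mx_deriv (Ups j) th *m psi0))^*)%C
      * braket (w k th) (mx_deriv (Ups j) th *m psi0)
   = ((\sum_j \sum_k (p j th * nrm (L th lam j k) + gg (p j th) (p k th) (A th j k)))%:C)%C.
  rewrite mulr_sumr rmorph_sum; apply: eq_bigr => j _.
  rewrite mulr_sumr rmorph_sum; apply: eq_bigr => k _.
  rewrite (mulrC (_^*)%C) mulcJ -(per_term th lam hl) rmorphM /=.
  by rewrite rmorph_nat.
rewrite eH eC.
have gge j k : 0 <= gg (p j th) (p k th) (A th j k) by apply: gg_ge0; apply: p_ge0.
have split_sum : \sum_j \sum_k (p j th * nrm (L th lam j k) + gg (p j th) (p k th) (A th j k))
   = \sum_j \sum_k p j th * nrm (L th lam j k) + \sum_j \sum_k gg (p j th) (p k th) (A th j k).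
  by rewrite -big_split /=; apply: eq_bigr => j _; rewrite big_split.
rewrite split_sum; split.
  move=> [E] j k pj pk.
  have E2 : \sum_j \sum_k gg (p j th) (p k th) (A th j k) = 0.
    by apply: (@addrI _ (\sum_j \sum_k p j th * nrm (L th lam j k))); rewrite addr0 -E.
  have E3 : \sum_k gg (p j th) (p k th) (A th j k) = 0.
    by apply: (psumr_eq0P _ E2) => // i _; apply: sumr_ge0 => l _; apply: gge.
  have E4 : gg (p j th) (p k th) (A th j k) = 0.
    by apply: (psumr_eq0P _ E3) => // i _; apply: gge.
  have := (gg_eq0 (A th j k) (p_ge0 j th) (p_ge0 k th)).1 E4 pj pk.
  by rewrite bW'W => ->; rewrite oppr0.
move=> H; rewrite [X in _ + X](_ : _ = 0) ?addr0 //.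
apply: big1 => j _; apply: big1 => k _.
apply/(gg_eq0 _ (p_ge0 j th) (p_ge0 k th)) => pj pk.
by apply/eqP; rewrite -oppr_eq0 -bW'W H.
Qed.

End Main.

Theorem lemma2 (R : realType) (d : nat)
  (psi0 : 'cV[R[i]]_d)
  (Ups : 'I_d -> R -> 'M[R[i]]_d)
  (p : 'I_d -> R -> R)
  (w : 'I_d -> R -> 'cV[R[i]]_d)
  (Hpsi0 : braket psi0 psi0 = 1)
  (HUdiff : forall k t, mx_derivable (Ups k) t)
  (HKraus : forall t, \sum_(k < d) adj (Ups k t) *m Ups k t = 1%:M)
  (Hcanon : forall t (j k : 'I_d),
     \tr (Ups k t *m pure_state psi0 *m adj (Ups j t))
       = if j == k then ((p k t)%:C)%C else 0)
  (Hwdiff : forall k t, mx_derivable (w k) t)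
  (Hwon : forall t (j k : 'I_d),
     braket (w j t) (w k t) = if j == k then 1 else 0)
  (Hw : forall t k, 0 < p k t ->
     w k t = (((Num.sqrt (p k t))^-1)%:C)%C *: (Ups k t *m psi0))
  (theta : R) (lam : 'M[R[i]]_d)
  (Hlam : is_SLD (rho_out p w) theta lam) :
  SLD_info (rho_out p w) theta lam = C_Ups Ups psi0 theta <->
  (forall j k : 'I_d, 0 < p j theta -> 0 < p k theta ->
     braket (mx_deriv (w j) theta) (w k theta) = 0).

Proof. exact: (@main R d psi0 Ups p w HUdiff Hcanon Hwdiff Hwon Hw theta lam Hlam). Qed.
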